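(* Let $H$ be a homogeneous relation on a finite set $V$ with $|V|\ge 2$ and let $x\in V$. Let $P_0$ be the partition of $V\setminus\{x\}$ into the equivalence classes of $H_x$. Consider the following refinement rule applied to a partition $P$ of $V\setminus\{x\}$ with a pivot $y\in V\setminus\{x\}$: letting $C(y)$ be the class of $P$ containing $y$, replace every class $C\neq C(y)$ of $P$ by the nonempty sets among $C\cap K$, where $K$ ranges over the equivalence classes of $H_y$. Starting from $P_0$ and applying this rule with arbitrary pivots in an arbitrary order until no application of the rule changes the partition, the final partition equals $MHS(x)$, the partition of $V\setminus\{x\}$ into the inclusion-maximal homogeneous sets not containing $x$.
   Context: $V$ is a finite set. A reflectless triple is a triple $(x,y,z)\in V^3$ with $x\neq y$ and $x\neq z$, written $(x|yz)$. A homogeneous relation $H$ on $V$ is a set of reflectless triples (we write $H(s|xy)$ when $(s|xy)\in H$) such that for every $s\in V$ the binary relation $H_s=\{(x,y): H(s|xy)\}$ is an equivalence relation on $V\setminus\{s\}$. For $X\subseteq V$ and $s\notin X$, $s$ distinguishes $X$ if there are $x,y\in X$ with not $H(s|xy)$. A homogeneous set is a nonempty $M\subseteq V$ such that no element of $V\setminus M$ distinguishes $M$. The inclusion-maximal homogeneous sets not containing $x$ form a partition of $V\setminus\{x\}$, denoted $MHS(x)$. *)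

(* Defs.v *)
From mathcomp Require Import all_boot.
Set Implicit Arguments. Unset Strict Implicit. Unset Printing Implicit Defensive.

(* A ternary relation on V: H s a b  encodes  H(s|ab). *)
Section Defs.
Variable V : finType.
Implicit Type H : V -> V -> V -> bool.

Definition reflectless_rel H : Prop :=
  forall s a b, H s a b -> (s != a) && (s != b).

Definition equiv_on (D : {set V}) (r : rel V) : Prop :=
  [/\ {in D, forall a, r a a},
      {in D &, forall a b, r a b -> r b a} &
      {in D & &, forall a b c, r a b -> r b c -> r a c}].

Definition homogeneous_rel H : Prop :=
  reflectless_rel H /\ forall s, equiv_on [set~ s] (H s).

Definition distinguishes H (s : V) (X : {set V}) : bool :=
  [exists a in X, exists b in X, ~~ H s a b].

Definition homogeneous_set H (M : {set V}) : bool :=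
  (M != set0) && [forall s in ~: M, ~~ distinguishes H s M].

Definition MHS H (x : V) : {set {set V}} :=
  [set M | maxset (fun M : {set V} => homogeneous_set H M && (x \notin M)) M].

Definition Hclasses H (s : V) : {set {set V}} :=
  equivalence_partition (H s) [set~ s].

Definition refine_step H (P : {set {set V}}) (y : V) : {set {set V}} :=
  \bigcup_(C in P)
    (if y \in C then [set C]
     else [set C :&: K | K in Hclasses H y] :\ set0).

End Defs.

(* Main.v *)
Require Import Defs.
From mathcomp Require Import all_boot.
Set Implicit Arguments. Unset Strict Implicit. Unset Printing Implicit Defensive.

Definition Inv (V : finType) (H : V -> V -> V -> bool) (x : V) (P : {set {set V}}) : Prop :=
  [/\ forall C, C \in P -> C != set0,
      forall C, C \in P -> x \notin C,
      forall C, C \in P -> forall a b, a \in C -> b \in C -> H x a b,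
      forall C D, C \in P -> D \in P -> forall z, z \in C -> z \in D -> C = D &
      forall M, homogeneous_set H M -> x \notin M -> exists2 C, C \in P & M \subset C].

Lemma hrefl (V : finType) (H : V -> V -> V -> bool) (hH : homogeneous_rel H) s a :
  a != s -> H s a a.
Proof. case: hH => _ /(_ s) [r _ _] ha; apply: r; by rewrite in_setC1. Qed.

Lemma hsym (V : finType) (H : V -> V -> V -> bool) (hH : homogeneous_rel H) s a b :
  a != s -> b != s -> H s a b -> H s b a.
Proof. case: hH => _ /(_ s) [_ r _] ha hb; apply: r; by rewrite in_setC1. Qed.

Lemma htrans (V : finType) (H : V -> V -> V -> bool) (hH : homogeneous_rel H) s a b c :
  a != s -> b != s -> c != s -> H s a b -> H s b c -> H s a c.
Proof. case: hH => _ /(_ s) [_ _ r] ha hb hc; apply: r; by rewrite in_setC1. Qed.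

Lemma class_mem (V : finType) (H : V -> V -> V -> bool) s K :
  K \in Hclasses H s -> exists2 a, a != s & K = [set w in [set~ s] | H s a w].
Proof.
rewrite /Hclasses /equivalence_partition => /imsetP [a ha ->].
by exists a; [rewrite -in_setC1 |].
Qed.

Lemma class_in (V : finType) (H : V -> V -> V -> bool) s a :
  a != s -> [set w in [set~ s] | H s a w] \in Hclasses H s.
Proof.
move=> ha; rewrite /Hclasses /equivalence_partition.
by apply/imsetP; exists a; rewrite ?in_setC1.
Qed.

Lemma class_eq (V : finType) (H : V -> V -> V -> bool) (hH : homogeneous_rel H) s a1 a2 z :
  a1 != s -> a2 != s -> z != s -> H s a1 z -> H s a2 z ->
  [set w in [set~ s] | H s a1 w] = [set w in [set~ s] | H s a2 w].
Proof.
move=> h1 h2 hz e1 e2; apply/setP => w; rewrite !inE.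
case hw: (w != s) => //=.
have e12 : H s a1 a2 by apply: (htrans hH h1 hz h2 e1); apply: hsym.
have e21 : H s a2 a1 by apply: hsym.
apply/idP/idP => e.
- exact: (htrans hH h2 h1 hw e21 e).
- exact: (htrans hH h1 h2 hw e12 e).
Qed.

Lemma homog_rel (V : finType) (H : V -> V -> V -> bool) M s a b :
  homogeneous_set H M -> s \notin M -> a \in M -> b \in M -> H s a b.
Proof.
case/andP=> _ /forallP /(_ s); rewrite inE => /implyP h hs ha hb.
move: (h hs); rewrite /distinguishes negb_exists_in => /forall_inP /(_ a ha).
by rewrite negb_exists_in => /forall_inP /(_ b hb); rewrite negbK.
Qed.

Lemma mem_refine (V : finType) (H : V -> V -> V -> bool) P y D :
  D \in refine_step H P y <->
  exists2 C, C \in P &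
    (if y \in C then D = C else D != set0 /\ exists2 K, K \in Hclasses H y & D = C :&: K).
Proof.
rewrite /refine_step; split.
- case/bigcupP => C hC hD; exists C => //; move: hD; case: ifP => _.
  + by rewrite inE => /eqP.
  + rewrite in_setD1 => /andP [hn /imsetP [K hK eD]]; split => //; by exists K.
- case=> C hC h; apply/bigcupP; exists C => //; move: h; case: ifP => _.
  + by move=> ->; rewrite inE.
  + case=> hn [K hK eD]; rewrite in_setD1 hn /=; apply/imsetP; by exists K.
Qed.

Lemma refine_sub (V : finType) (H : V -> V -> V -> bool) P y D :
  D \in refine_step H P y -> exists2 C, C \in P & D \subset C.
Proof.
case/mem_refine => C hC hD; exists C => //; move: hD; case: ifP => _.
- by move=> ->.
- by case=> _ [K _ ->]; apply: subsetIl.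
Qed.

Lemma Inv0 (V : finType) (H : V -> V -> V -> bool) (hH : homogeneous_rel H) x :
  Inv H x (Hclasses H x).
Proof.
split.
- move=> C /class_mem [a ha ->]; apply/set0Pn; exists a.
  by rewrite !inE ha (hrefl hH ha).
- by move=> C /class_mem [a ha ->]; rewrite !inE eqxx.
- move=> C /class_mem [a0 ha0 ->] a b; rewrite !inE => /andP [ha e1] /andP [hb e2].
  apply: (htrans hH ha ha0 hb _ e2); exact: hsym.
- move=> C D /class_mem [a1 h1 ->] /class_mem [a2 h2 ->] z; rewrite !inE.
  case/andP=> hz e1 /andP [_ e2]; exact: (class_eq hH h1 h2 hz e1 e2).
- move=> M hM hxM; have := hM; case/andP => /set0Pn [a ha] _.
  have hax : a != x by apply: contraNneq hxM => <-.
  exists [set w in [set~ x] | H x a w]; first exact: class_in.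
  apply/subsetP => b hb; rewrite !inE.
  have -> : b != x by apply: contraNneq hxM => <-.
  exact: (homog_rel hM hxM ha hb).
Qed.

Lemma Inv_step (V : finType) (H : V -> V -> V -> bool) (hH : homogeneous_rel H) x P y :
  Inv H x P -> Inv H x (refine_step H P y).
Proof.
case=> ha hb hc hd he; split.
- move=> D /mem_refine [C hC]; case: ifP => _; first by move=> ->; apply: ha.
  by case.
- move=> D /refine_sub [C hC /subsetP sub]; apply: contra (hb C hC); exact: sub.
- move=> D /refine_sub [C hC /subsetP sub] a b a1 b1; apply: (hc C hC); exact: sub.
- move=> D1 D2 h1 h2 z z1 z2.
  have [C1 hC1 /subsetP s1] := refine_sub h1.
  have [C2 hC2 /subsetP s2] := refine_sub h2.
  have e12 : C1 = C2 by apply: (hd _ _ hC1 hC2 z); [apply: s1 | apply: s2].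
  have [C1' hC1' k1] := proj1 (mem_refine _ _ _ _) h1.
  have [C2' hC2' k2] := proj1 (mem_refine _ _ _ _) h2.
  have eC1 : C1' = C1.
    apply: (hd _ _ hC1' hC1 z) => //; last exact: s1.
    move: k1; case: ifP => _; first by move=> <-.
    by case=> _ [K _ eD]; move: z1; rewrite eD inE => /andP [].
  have eC2 : C2' = C1.
    rewrite e12; apply: (hd _ _ hC2' hC2 z) => //; last exact: s2.
    move: k2; case: ifP => _; first by move=> <-.
    by case=> _ [K _ eD]; move: z2; rewrite eD inE => /andP [].
  move: k1 k2; rewrite eC1 eC2; case: ifP => _; first by move=> -> ->.
  case=> _ [K1 /class_mem [a1 ha1 eK1] eD1] [_ [K2 /class_mem [a2 ha2 eK2] eD2]].
  move: z1 z2; rewrite eD1 eD2 eK1 eK2 !inE => /and3P [_ hz e1] /and3P [_ _ e2].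
  by rewrite (class_eq hH ha1 ha2 hz e1 e2).
- move=> M hM hxM; have [C hC sMC0] := he M hM hxM.
  have sMC := subsetP sMC0.
  case hyC: (y \in C).
    by exists C => //; apply/mem_refine; exists C => //; rewrite hyC.
  have hyM : y \notin M by apply: contraFN hyC; apply: sMC.
  have := hM; case/andP => /set0Pn [a haM] _.
  have hay : a != y by apply: contraNneq hyM => <-.
  set D := C :&: [set w in [set~ y] | H y a w].
  have sMD : M \subset D.
    apply/subsetP => b hbM; rewrite !inE sMC // /=.
    have -> : b != y by apply: contraNneq hyM => <-.
    exact: (homog_rel hM hyM haM hbM).
  exists D => //; apply/mem_refine; exists C => //; rewrite hyC; split.
    by apply/set0Pn; exists a; apply: (subsetP sMD).
  by exists [set w in [set~ y] | H y a w] => //; apply: class_in.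
Qed.

Lemma Inv_foldl (V : finType) (H : V -> V -> V -> bool) (hH : homogeneous_rel H) x s P :
  Inv H x P -> Inv H x (foldl (refine_step H) P s).
Proof.
elim: s P => //= y s IH P hP; apply: IH; exact: Inv_step.
Qed.

Lemma Inv_final (V : finType) (H : V -> V -> V -> bool) (hH : homogeneous_rel H) x P :
  Inv H x P -> (forall y : V, y != x -> refine_step H P y = P) -> P = MHS H x.
Proof.
move=> hI hstab; have [ha hb hc hd he] := hI.
have homC : forall C, C \in P -> homogeneous_set H C.
  move=> C hC; apply/andP; split; first exact: ha.
  apply/forall_inP => s; rewrite inE => hsC.
  rewrite /distinguishes; apply/negP => /existsP [a /andP [haC /existsP [b /andP [hbC hn]]]].
  move/negP: hn; apply.
  case hsx: (s == x); first by rewrite (eqP hsx); apply: (hc C).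
  have has : a != s by apply: contraNneq hsC => <-.
  set D := C :&: [set w in [set~ s] | H s a w].
  have hD : D \in P.
    rewrite -(hstab s (negbT hsx)); apply/mem_refine; exists C => //.
    rewrite (negbTE hsC); split.
      by apply/set0Pn; exists a; rewrite !inE haC has (hrefl hH has).
    by exists [set w in [set~ s] | H s a w] => //; apply: class_in.
  have eD : D = C.
    by apply: (hd _ _ hD hC a) => //; rewrite !inE haC has (hrefl hH has).
  by move: hbC; rewrite -eD !inE => /and3P [].
apply/setP => M; rewrite /MHS inE; apply/idP/maxsetP.
- move=> hM; split; first by rewrite homC // hb.
  move=> B /andP [hB hxB] sMB.
  have [C hC sBC] := he B hB hxB.
  have := ha M hM; case/set0Pn => m hm.
  have eMC : M = C by apply: (hd _ _ hM hC m) => //; apply: (subsetP sBC); apply: (subsetP sMB).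
  by apply/eqP; rewrite eqEsubset sMB andbT eMC.
- case=> /andP [hM hxM] hmax.
  have [C hC sMC] := he M hM hxM.
  have <- // : C = M by apply: hmax => //; rewrite homC // hb.
Qed.

Theorem mainTheorem10 (V : finType) (H : V -> V -> V -> bool) (x : V)
  (hH : homogeneous_rel H) (hV : 2 <= #|V|)
  (pivots : seq V) (hpiv : all (fun y => y != x) pivots) :
  let P := foldl (refine_step H) (Hclasses H x) pivots in
  (forall y : V, y != x -> refine_step H P y = P) ->
  P = MHS H x.
Proof.
move=> P hstab; apply: Inv_final => //.
exact: Inv_foldl (Inv0 hH x).
Qed.
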